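(* Every almost reciprocal Puiseux monoid is atomic.
   Context: A Puiseux monoid is an additive submonoid of $(\mathbb{Q}_{\ge 0},+)$. For a positive rational $r = n/d$ in lowest terms, $\mathsf{d}(r) := d$. An almost reciprocal Puiseux monoid is a monoid of the form $\langle \frac{c_n}{d_n} \mid n \in \mathbb{N} \rangle$ (the submonoid of $\mathbb{Q}_{\ge 0}$ generated by these elements), where $(d_n)_{n\ge 1}$ is a strictly increasing sequence of positive integers whose terms are pairwise relatively prime, and $(c_n)_{n \ge 1}$ is a sequence of positive integers with $\gcd(c_n,d_n)=1$ for every $n$. An atom of $M$ is a nonzero element $a$ such that $a = x+y$ with $x,y \in M$ forces $x=0$ or $y=0$; $M$ is atomic if every element is a finite sum of atoms. *)

(* Defs.v *)
From mathcomp Require Import all_boot all_order all_algebra.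
Set Implicit Arguments. Unset Strict Implicit. Unset Printing Implicit Defensive.
Import Order.TTheory GRing.Theory Num.Theory.
Local Open Scope ring_scope.

(* A submonoid of (Q_{>=0},+) is represented by its membership predicate on rat. *)

Definition gen_monoid (g : nat -> rat) : rat -> Prop :=
  fun x => exists s : seq nat, x = \sum_(i <- s) g i.

Definition is_atom (M : rat -> Prop) (a : rat) : Prop :=
  [/\ M a, a != 0 &
     forall x y, M x -> M y -> a = x + y -> x = 0 \/ y = 0].

Definition atomic (M : rat -> Prop) : Prop :=
  forall x, M x -> exists s : seq rat,
      (forall a, a \in s -> is_atom M a) /\ x = \sum_(a <- s) a.

(* Data of an almost reciprocal Puiseux monoid <c_n / d_n | n>
   (sequences indexed from 0 instead of 1). *)
Definition almost_reciprocal_data (c d : nat -> nat) : Prop :=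
  [/\ (forall n, (0 < d n)%N),
      (forall m n, (m < n)%N -> (d m < d n)%N),
      (forall m n, m <> n -> coprime (d m) (d n)),
      (forall n, (0 < c n)%N) &
      (forall n, coprime (c n) (d n))].

Definition almost_reciprocal_monoid (c d : nat -> nat) : rat -> Prop :=
  gen_monoid (fun n => (c n)%:R / (d n)%:R).

(* Main.v *)
Require Import Defs.
From mathcomp Require Import all_boot all_order all_algebra.
From Stdlib Require Import Classical.
From mathcomp Require Import ring lra zify.
Import Order.TTheory GRing.Theory Num.Theory.

Section Aux.
Local Open Scope ring_scope.
Variables c d : nat -> nat.
Let g := fun n : nat => ((c n)%:R / (d n)%:R : rat).

Lemma dvd_prod_seq (u : seq nat) i : i \in u -> (d i %| \prod_(j <- u) d j)%N.
Proof.
elim: u => [//|a u IH]; rewrite inE big_cons => /orP[/eqP->|/IH H].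
  exact: dvdn_mulr.
exact: dvdn_mull.
Qed.

Lemma coprime_prod_seq (u : seq nat) n :
  (forall j, j \in u -> coprime (d n) (d j)) -> coprime (d n) (\prod_(j <- u) d j).
Proof.
elim: u => [|a u IH] H; first by rewrite big_nil coprimen1.
rewrite big_cons coprimeMr H ?mem_head //= IH // => j ju.
by apply: H; rewrite inE ju orbT.
Qed.

Lemma sum_nat (u : seq nat) : (forall i, i \in u -> (0 < d i)%N) ->
  (\sum_(i <- u) g i) * (\prod_(j <- u) d j)%:R =
  (\sum_(i <- u) (c i * (\prod_(j <- u) d j %/ d i)))%N%:R.
Proof.
move=> Hpos; rewrite big_distrl natr_sum; apply: eq_big_seq => i iu.
have Hd := @dvd_prod_seq u i iu.
have dn0 : (d i)%:R != 0 :> rat by rewrite pnatr_eq0 -lt0n Hpos.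
rewrite /g natrM -{1}(divnK Hd) natrM /=.
by field.
Qed.

Lemma sum_ge0 (s : seq nat) : (forall i, 0 <= g i) -> 0 <= \sum_(i <- s) g i.
Proof. by move=> H; apply: sumr_ge0. Qed.

End Aux.

Local Open Scope ring_scope.

Theorem corollary3p6 (c d : nat -> nat) :
  almost_reciprocal_data c d -> atomic (almost_reciprocal_monoid c d).
Proof.
case=> dpos dinc dcop cpos cdcop.
set g := fun n : nat => ((c n)%:R / (d n)%:R : rat).
have gpos : forall n, 0 < g n.
  by move=> n; rewrite /g divr_gt0 // ltr0n.
have gge0 : forall n, 0 <= g n by move=> n; apply: ltW.
have Mg : forall n, almost_reciprocal_monoid c d (g n).
  by move=> n; exists [:: n]; rewrite big_seq1.
have sum_ge : forall (s : seq nat) n, n \in s -> g n <= \sum_(i <- s) g i.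
  move=> s n ns; rewrite (big_rem _ ns) /= lerDl; exact: sumr_ge0.
have sum_gt0 : forall (s : seq nat), s != [::] -> 0 < \sum_(i <- s) g i.
  case=> [//|a s] _; rewrite big_cons; apply: ltr_pwDl => //; exact: sumr_ge0.
have atom1 : forall n, (1 < d n)%N -> is_atom (almost_reciprocal_monoid c d) (g n).
  move=> n dn1; split => //; first by rewrite gt_eqF.
  move=> x y [s ->] [t ->] Hxy.
  case: (altP (s =P [::])) => [->|sne]; first by left; rewrite big_nil.
  case: (altP (t =P [::])) => [->|tne]; first by right; rewrite big_nil.
  exfalso.
  have xp := sum_gt0 _ sne; have yp := sum_gt0 _ tne.
  case: (boolP (n \in s)) => ns.
    move: (sum_ge _ _ ns) => H.
    have : g n < \sum_(i <- s) g i + \sum_(i <- t) g i.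
      by apply: (le_lt_trans H); rewrite ltrDl.
    by rewrite -Hxy ltxx.
  case: (boolP (n \in t)) => nt.
    move: (sum_ge _ _ nt) => H.
    have : g n < \sum_(i <- s) g i + \sum_(i <- t) g i.
      by apply: (le_lt_trans H); rewrite ltrDr.
    by rewrite -Hxy ltxx.
  have Hu : g n = \sum_(i <- s ++ t) g i by rewrite big_cat.
  have nu : n \notin s ++ t by rewrite mem_cat negb_or ns nt.
  set P := (\prod_(j <- s ++ t) d j)%N.
  have := @sum_nat c d (s ++ t) (fun i _ => dpos i).
  rewrite -/P -Hu /g.
  set N := (\sum_(i <- s ++ t) _)%N => HN.
  have HN2 : ((c n * P)%N%:R = (N * d n)%N%:R :> rat).
    rewrite !natrM -HN mulrAC divfK //.
    by rewrite pnatr_eq0 -lt0n dpos.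
  move/eqP: HN2; rewrite eqr_nat => /eqP HN3.
  have : (d n %| c n * P)%N by rewrite HN3 dvdn_mull.
  rewrite Gauss_dvdr; last by rewrite coprime_sym.
  have cP : coprime (d n) P.
    apply: coprime_prod_seq => j ju; apply: dcop => E.
    by move: nu; rewrite E ju.
  move=> /gcdn_idPl E; move: cP; rewrite /coprime E => /eqP E1.
  by rewrite E1 in dn1.
have gen : forall n, exists L : seq rat,
    (forall a, a \in L -> is_atom (almost_reciprocal_monoid c d) a) /\
    g n = \sum_(a <- L) a.
  move=> n.
  case: (ltnP 1 (d n)) => dn.
    exists [:: g n]; split; last by rewrite big_seq1.
    by move=> a; rewrite inE => /eqP->; apply: atom1.
  have n0 : n = 0%N.
    case: n dn => // n dn; have := dinc 0%N n.+1 isT.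
    by have := dpos 0%N; move: dn; clear; lia.
  have big_atom : forall s : seq nat, (forall i, i \in s -> i != 0%N) ->
      forall a, a \in map g s -> is_atom (almost_reciprocal_monoid c d) a.
    move=> s Hs a /mapP[i is_ ->]; apply: atom1.
    have := Hs i is_; case: i is_ => // i _ _.
    by have := dinc 0%N i.+1 isT; have := dpos 0%N; clear; lia.
  case: (classic (is_atom (almost_reciprocal_monoid c d) (g n))) => Ha.
    exists [:: g n]; split; last by rewrite big_seq1.
    by move=> a; rewrite inE => /eqP->.
  have : exists x y, [/\ almost_reciprocal_monoid c d x,
       almost_reciprocal_monoid c d y, g n = x + y, x <> 0 & y <> 0].
    apply: NNPP => H; apply: Ha; split => //; first by rewrite gt_eqF.
    move=> x y Mx My E; apply: NNPP => H2; apply: H; exists x, y; split => //.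
      by move=> x0; apply: H2; left.
    by move=> y0; apply: H2; right.
  case=> x [y [[s xs] [t yt] E x0 y0]].
  have nz : forall (u : seq nat) z, almost_reciprocal_monoid c d z -> z <> 0 ->
     g n = \sum_(i <- u) g i + z -> forall i, i \in u -> i != 0%N.
    move=> u z [w zw] z0 Eu i iu; apply/negP => /eqP i0.
    have zp : 0 < z.
      rewrite lt_def; apply/andP; split; first by apply/eqP.
      rewrite zw; apply: sumr_ge0 => k _; exact: (gge0 k).
    have := sum_ge _ _ iu; rewrite i0 -n0 => H.
    have : g n < \sum_(i <- u) g i + z by apply: (le_lt_trans H); rewrite ltrDl.
    by rewrite -Eu ltxx.
  exists (map g s ++ map g t); split.
    move=> a; rewrite mem_cat => /orP[] ha.
      apply: (big_atom s) => //; apply: (nz s y) => //.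
        by exists t.
      by rewrite -xs.
    apply: (big_atom t) => //; apply: (nz t x) => //.
      by exists s.
    by rewrite -yt addrC.
  by rewrite big_cat /= !big_map E xs yt.
move=> x [s ->].
elim: s => [|a s [L [HL EL]]].
  by exists [::]; split => //; rewrite !big_nil.
have [La [HLa ELa]] := gen a.
exists (La ++ L); split.
  by move=> b; rewrite mem_cat => /orP[]; [apply: HLa | apply: HL].
by rewrite big_cons big_cat /= -EL -ELa.
Qed.
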